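(* Let $p>2$ be a prime and $k$ any field of characteristic $p$. Then $R_1^{(p)}\neq R_2^{(p)}$.
   Context: Let $X=\{x_1,x_2,\ldots\}$ be a countably infinite set and let $k_0\langle X\rangle$ denote the free associative $k$-algebra (without identity) on $X$. A $T$-space of $k_0\langle X\rangle$ is a $k$-linear subspace closed under every algebra endomorphism of $k_0\langle X\rangle$; the $T$-space generated by a subset is the smallest $T$-space containing it. For $v_1,\ldots,v_d\in k_0\langle X\rangle$, let $S_d(v_1,\ldots,v_d)=\sum_{\sigma\in\Sigma_d}\prod_{i=1}^d v_{\sigma(i)}$, where $\Sigma_d$ is the symmetric group on $d$ letters. Let $R_1^{(d)}$ be the $T$-space generated by $S_d(x_1,\ldots,x_d)$, and let $R_2^{(d)}$ be the $T$-space generated by $R_1^{(d)}$ together with all products $u\,S_d(v_1,\ldots,v_d)$ with $u\in R_1^{(d)}$, $v_i\in k_0\langle X\rangle$. *)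

(* Defs.v *)
From HB Require Import structures.
From mathcomp Require Import all_boot all_order all_algebra all_fingroup.
From mathcomp.multinomials Require Import monalg.
Set Implicit Arguments. Unset Strict Implicit. Unset Printing Implicit Defensive.
Import GRing.Theory.
Local Open Scope ring_scope.

Notation FA k := {malg k[{fmonom nat}]}.

Section FreeAlg.
Context (k : fieldType).

(* k<X>: the free unital associative k-algebra on X = {x_0, x_1, ...},
   realised as the monoid algebra of the free monoid on nat. *)


Definition xvar (i : nat) : FA k := << fmu i >>.

(* membership in k_0<X>: zero coefficient on the empty word (constant term) *)
Definition k0 (f : FA k) : Prop := mcoeff (mone : {fmonom nat}) f = 0.

(* algebra endomorphisms of k_0<X> (k-linear, multiplicative maps k_0<X> -> k_0<X>),
   represented by functions FA k -> FA k whose restriction to k_0<X> has these properties *)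
Definition is_endo (g : FA k -> FA k) : Prop :=
  [/\ forall u, k0 u -> k0 (g u),
      forall (a : k) u v, k0 u -> k0 v -> g (a *: u + v) = a *: g u + g v
    & forall u v, k0 u -> k0 v -> g (u * v) = g u * g v].

Definition subspace0 (V : FA k -> Prop) : Prop :=
  [/\ forall f, V f -> k0 f, V 0 & forall (a : k) u v, V u -> V v -> V (a *: u + v)].

Definition Tspace (V : FA k -> Prop) : Prop :=
  subspace0 V /\ forall g, is_endo g -> forall f, V f -> V (g f).

Definition Tgen (G : FA k -> Prop) (f : FA k) : Prop :=
  forall V, Tspace V -> (forall h, G h -> V h) -> V f.

Definition Ssym (d : nat) (v : 'I_d -> FA k) : FA k :=
  \sum_(s : 'S_d) \prod_(i < d) v (s i).

Definition R1 (d : nat) : FA k -> Prop :=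
  Tgen (fun f => f = Ssym (fun i : 'I_d => xvar i)).

Definition R2 (d : nat) : FA k -> Prop :=
  Tgen (fun f => R1 d f \/
    exists (u : FA k) (v : 'I_d -> FA k),
      [/\ R1 d u, forall i, k0 (v i) & f = u * Ssym v]).

End FreeAlg.

(* Main.v *)
Require Import Defs.
From HB Require Import structures.
From mathcomp Require Import all_boot all_order all_algebra all_fingroup.
From mathcomp.multinomials Require Import monalg.
From mathcomp Require Import cyclic zify.
Set Implicit Arguments. Unset Strict Implicit. Unset Printing Implicit Defensive.
Import GRing.Theory.
Local Open Scope ring_scope.


Section Cyc.
Variables (k : fieldType) (n : nat).

Lemma tr_rot (p : nat) (G : 'I_p -> 'M[k]_n) :
  \tr (\prod_(i < p) G (ordS i)) = \tr (\prod_(i < p) G i).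
Proof.
case: p G => [|q] G; first by rewrite !big_ord0.
rewrite big_ord_recr big_ord_recl /= -!mulmxE mxtrace_mulC.
congr (\tr (_ *m _)).
  by congr (G _); apply: val_inj; rewrite /= modnn.
apply: eq_bigr => i _; congr (G _); apply: val_inj => /=.
by rewrite modn_small // ltnS.
Qed.

Definition rot p : 'S_p := perm (@ordS_inj p).

Lemma rotX p j (i : 'I_p) : val ((rot p ^+ j)%g i) = ((i + j) %% p)%N.
Proof.
elim: j => [|j IH]; first by rewrite expg0 perm1 addn0 modn_small.
rewrite expgSr permM permE /= IH addnS. rewrite -[((i + j) %% p).+1]addn1 modnDml addn1. by [].
Qed.

Lemma order_rot p : (1 < p)%N -> prime p -> #[rot p]%g = p.
Proof.
move=> p1 pp.
have ne1 : #[rot p]%g != 1%N.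
  rewrite order_eq1; apply/eqP => e.
  have := rotX 1 (Ordinal (ltnW p1)); rewrite expg1 e perm1 /= add0n modn_small //.
apply/(prime_nt_dvdP pp ne1).
rewrite order_dvdn; apply/eqP/permP => i; rewrite perm1; apply: val_inj.
by rewrite rotX modnDr modn_small.
Qed.

Lemma sym_tr_pchar p (M : 'I_p -> 'M[k]_n) :
  prime p -> p \in [pchar k] ->
  \sum_(s : 'S_p) \tr (\prod_(i < p) M (s i)) = 0.
Proof.
move=> pp chp.
pose F (s : 'S_p) := \tr (\prod_(i < p) M (s i)).
have Frot : forall j s, F ((rot p ^+ j) * s)%g = F s.
  elim=> [|j IH] s; first by rewrite expg0 mul1g.
  rewrite expgS -mulgA -(IH s); move: (_ * s)%g => t.
  rewrite /F -[RHS]tr_rot.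
  by congr (\tr _); apply: eq_bigr => i _; rewrite permM /rot permE.
have -> : \sum_(s : 'S_p) F s = \sum_(s in [set: 'S_p]) F s.
  by apply: eq_bigl => s; rewrite in_setT.
rewrite (set_partition_big _ (rcosets_partition (subsetT <[rot p]>%g))) /=.
apply: big1 => C /rcosetsP [y _ ->].
rewrite (eq_bigr (fun _ => F y)); last first.
  by move=> x /rcosetP [a /cycleP [j ->] ->]; rewrite Frot.
rewrite sumr_const card_rcoset -orderE order_rot ?prime_gt1 //.
exact: mulrn_pchar.
Qed.
End Cyc.


Definition hA (k : fieldType) (N : nat) (A : nat -> 'M[k]_N.+1) (m : {fmonom nat}) : 'M[k]_N.+1 :=
  \prod_(i <- (m : seq nat)) A i.

Lemma hA_mmorph (k : fieldType) (N : nat) (A : nat -> 'M[k]_N.+1) : mmorphism (hA A).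
Proof.
split; last by rewrite /hA fm1 big_nil.
by move=> m1 m2; rewrite /hA fmM big_cat.
Qed.

HB.instance Definition _ (k : fieldType) (N : nat) (A : nat -> 'M[k]_N.+1) :=
  isMultiplicative.Build _ _ (hA A) (hA_mmorph A).

Definition phi (k : fieldType) (N : nat) (A : nat -> 'M[k]_N.+1) (f : {malg k[{fmonom nat}]}) : 'M[k]_N.+1 :=
  mmap (@scalar_mx k N.+1) (hA A) f.

Section Phi.
Variables (k : fieldType) (N : nat) (A : nat -> 'M[k]_N.+1).

Lemma phi_mult : multiplicative (phi A).
Proof.
apply: commr_mmap_is_multiplicative => g m m'.
by rewrite /GRing.comm /= -!mulmxE scalar_mxC.
Qed.

Lemma phi_add : zmod_morphism (phi A).
Proof. exact: mmap_is_additive. Qed.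

HB.instance Definition _ := GRing.isZmodMorphism.Build _ _ (phi A) phi_add.
HB.instance Definition _ := GRing.isMultiplicative.Build _ _ (phi A) phi_mult.

Lemma phiZ a f : phi A (a *: f) = a *: phi A f.
Proof. by rewrite /phi mmapZ /= -mul_scalar_mx mulmxE. Qed.

Lemma phiX i : phi A << fmu i >> = A i.
Proof. by rewrite /phi mmapU /= mul1r /hA fmuE /= big_seq1. Qed.
End Phi.


Definition succr := fun a b : nat => b == a.+1.

Lemma path_succ_iota a l : path succr a l -> a :: l = iota a (size l).+1.
Proof.
elim: l a => [|b l IH] a //= /andP [/eqP -> /IH ->] //.
Qed.

Lemma path_iota a m : path succr a (iota a.+1 m) /\ last a (iota a.+1 m) = (a + m)%N.
Proof.
elim: m a => [|m IH] a /=; first by rewrite addn0.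
by case: (IH a.+1) => -> ->; rewrite /succr eqxx addSnnS.
Qed.

Section Chain.
Variables (k : fieldType) (N p : nat) (e : nat -> 'I_N.+1).
Hypothesis einj : forall x y, (x <= p)%N -> (y <= p)%N -> e x = e y -> x = y.
Definition Bm (a : nat) : 'M[k]_N.+1 := delta_mx (e a) (e a.+1).

Lemma prodB a l : all (fun j => j < p)%N (a :: l) ->
  \prod_(j <- a :: l) Bm j = if path succr a l then delta_mx (e a) (e (last a l).+1) else 0.
Proof.
elim: l a => [|b l IH] a /=; first by rewrite big_cons big_nil mulr1.
move=> /and3P [ap bp al].
rewrite big_cons IH /= ?bp //.
case: (path succr b l); last by rewrite andbF mulr0.
rewrite andbT /Bm -mulmxE mul_delta_mx_cond /succr.
case: eqP => [eab|neab].
  by rewrite (einj ap (ltnW bp) eab) eqxx.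
case: eqP => // eba; case: neab; by rewrite eba.
Qed.

End Chain.

Lemma chain_sum (k : fieldType) (N q : nat) (e : nat -> 'I_N.+1) :
  (forall x y, (x <= q.+1)%N -> (y <= q.+1)%N -> e x = e y -> x = y) ->
  \sum_(s : 'S_q.+1) \prod_(i < q.+1) (Bm k e) (s i) = delta_mx (e 0) (e q.+1).
Proof.
move=> einj.
have Hl : forall s : 'S_q.+1, \prod_(i < q.+1) (Bm k e) (s i) =
   \prod_(j <- nat_of_ord (s ord0) :: map (fun i => nat_of_ord (s (lift ord0 i))) (enum 'I_q)) (Bm k e) j.
  move=> s; rewrite big_ord_recl big_cons big_map.
  by congr (_ * _); rewrite enumT unlock.
have Hall : forall s : 'S_q.+1, all (fun j => j < q.+1)%N
    (nat_of_ord (s ord0) :: map (fun i => nat_of_ord (s (lift ord0 i))) (enum 'I_q)).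
  move=> s /=; rewrite ltn_ord /=; apply/allP => x /mapP [i _ ->]; exact: ltn_ord.
rewrite (bigD1 1%g) //= [X in _ + X]big1 ?addr0.
  rewrite Hl (prodB k einj) ?Hall // perm1.
  have -> : [seq nat_of_ord ((1%g : 'S_q.+1) (lift ord0 i)) | i <- enum 'I_q] = iota 1 q.
    rewrite (eq_map (g := fun i : 'I_q => (nat_of_ord i).+1)); last by move=> i; rewrite perm1.
    by rewrite (map_comp succn (@nat_of_ord q)) val_enum_ord -(iotaDl 1).
  case: (path_iota 0 q) => H1 H2; rewrite /= H1 H2.
  by [].
move=> s sn1; rewrite Hl (prodB k einj) ?Hall //.
case: ifP => // /path_succ_iota; rewrite size_map size_enum_ord => E.
set a := nat_of_ord (s ord0) in E.
have sv : forall j : 'I_q.+1, nat_of_ord (s j) = (a + j)%N.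
  move=> j; rewrite -(nth_iota 0 a (ltn_ord j)) -E.
  case: j => [[|i] Hi] /=.
    by rewrite /a; congr (nat_of_ord (s _)); apply: val_inj.
  have Hi' : (i < q)%N by [].
  rewrite (nth_map (Ordinal Hi')) ?size_enum_ord //.
  rewrite -[X in nth _ _ X]/(nat_of_ord (Ordinal Hi')) nth_ord_enum.
  by congr (nat_of_ord (s _)); apply: val_inj.
have a0 : a = 0%N.
  have := ltn_ord (s ord_max); rewrite sv /=; lia.
case/eqP: sn1; apply/permP => j; rewrite perm1; apply: ord_inj.
by rewrite sv a0.
Qed.


Section K0.
Variable k : fieldType.
Implicit Types u v f : FA k.

Lemma k0_0 : k0 (0 : FA k).
Proof. by rewrite /k0 mcoeff0. Qed.

Lemma k0_lin (a : k) u v : k0 u -> k0 v -> k0 (a *: u + v).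
Proof. by rewrite /k0 mcoeffD mcoeffZ => -> ->; rewrite mulr0 addr0. Qed.

Lemma k0_mul u v : k0 u -> k0 v -> k0 (u * v).
Proof. by rewrite /k0 (mcoeff1g_is_multiplicative _ _).1 => -> ->; rewrite mulr0. Qed.

Lemma k0_x i : k0 (xvar k i).
Proof. by rewrite /k0 /xvar mcoeffU fm1_eq1. Qed.

Lemma k0_add u v : k0 u -> k0 v -> k0 (u + v).
Proof. by move=> hu hv; rewrite -(scale1r u); apply: k0_lin. Qed.

Lemma endo_id : is_endo (fun f : FA k => f).
Proof. by split. Qed.

Lemma endo_comp (g h : FA k -> FA k) : is_endo g -> is_endo h -> is_endo (fun f => g (h f)).
Proof.
move=> [g0 gl gm] [h0 hl hm]; split.
- by move=> u /h0 /g0.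
- by move=> a u v hu hv; rewrite hl // gl //; apply: h0.
- by move=> u v hu hv; rewrite hm // gm //; apply: h0.
Qed.

Lemma endo0 (g : FA k -> FA k) : is_endo g -> g 0 = 0.
Proof.
move=> [_ gl _]; have := gl 1 0 0 k0_0 k0_0.
rewrite !scale1r addr0 => /(congr1 (fun x => x - g 0)); rewrite subrr addrK.
by move=> <-.
Qed.

Lemma endo_sum (g : FA k -> FA k) (I : Type) (r : seq I) (P : I -> FA k) : is_endo g ->
  (forall i, k0 (P i)) ->
  k0 (\sum_(i <- r) P i) /\ g (\sum_(i <- r) P i) = \sum_(i <- r) g (P i).
Proof.
move=> ge hP; have [g0 gl gm] := ge.
elim: r => [|i r [hx IH]]; rewrite ?big_nil ?big_cons.
  by split; [apply: k0_0 | apply: endo0].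
split; first exact: k0_add.
by rewrite -[P i in LHS](scale1r (P i)) gl ?hP // scale1r IH.
Qed.

Lemma endo_prod (g : FA k -> FA k) (n : nat) (P : 'I_n.+1 -> FA k) : is_endo g ->
  (forall i, k0 (P i)) ->
  k0 (\prod_(i < n.+1) P i) /\ g (\prod_(i < n.+1) P i) = \prod_(i < n.+1) g (P i).
Proof.
move=> [g0 gl gm] hP.
rewrite !big_ord_recl.
have : (\prod_(i < n) P (lift ord0 i) = 1 /\ \prod_(i < n) g (P (lift ord0 i)) = 1) \/
  (k0 (\prod_(i < n) P (lift ord0 i)) /\
   g (\prod_(i < n) P (lift ord0 i)) = \prod_(i < n) g (P (lift ord0 i))).
  elim: (index_enum _) => [|i r IH]; rewrite ?big_nil ?big_cons; first by left.
  case: IH => [[-> ->]|[hx IH]].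
    by right; rewrite !mulr1.
  by right; split; [apply: k0_mul | rewrite gm // IH].
case=> [[-> ->]|[hx <-]]; first by rewrite !mulr1.
by split; [apply: k0_mul | rewrite gm].
Qed.

Lemma endo_Ssym (g : FA k -> FA k) (n : nat) (v : 'I_n.+1 -> FA k) : is_endo g ->
  (forall i, k0 (v i)) ->
  k0 (Ssym v) /\ g (Ssym v) = Ssym (fun i => g (v i)).
Proof.
move=> ge hv; rewrite /Ssym.
have hP : forall s : 'S_n.+1, k0 (\prod_(i < n.+1) v (s i)) /\
    g (\prod_(i < n.+1) v (s i)) = \prod_(i < n.+1) g (v (s i)).
  by move=> s; apply: endo_prod.
have [h1 h2] := endo_sum (index_enum _) ge (fun s => (hP s).1).
split => //; rewrite h2; apply: eq_bigr => s _; exact: (hP s).2.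
Qed.
End K0.


Theorem theorem5p1 (p : nat) (k : fieldType) :
  prime p -> (2 < p)%N -> (p \in [pchar k])%R ->
  ~ (forall f : FA k, R1 p f <-> R2 p f).
Proof.
move=> pp p2 chp H.
have [q pq] : exists q, p = q.+1 by exists p.-1; rewrite prednK // prime_gt0.
subst p.
pose e1 := fun j : nat => (inord j : 'I_q.+2).
pose e2 := fun j : nat => (inord (q.+1 - j) : 'I_q.+2).
have e1inj : forall x y, (x <= q.+1)%N -> (y <= q.+1)%N -> e1 x = e1 y -> x = y.
  by move=> x y hx hy /(congr1 (@nat_of_ord _)); rewrite /e1 !inordK.
have e2inj : forall x y, (x <= q.+1)%N -> (y <= q.+1)%N -> e2 x = e2 y -> x = y.
  move=> x y hx hy /(congr1 (@nat_of_ord _)); rewrite /e2 !inordK; try lia.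
pose A := fun i : nat => if (i < q.+1)%N then Bm k e1 i
  else if (i < (q.+1).*2)%N then Bm k e2 (i - q.+1) else 0.
pose V := fun f : FA k => k0 f /\ forall g, is_endo g -> \tr (phi A (g f)) = 0.
have TV : Tspace V.
  split; first split.
  - by move=> f [].
  - split; first exact: k0_0.
    by move=> g ge; rewrite endo0 // raddf0 raddf0.
  - move=> a u v [hu Hu] [hv Hv]; split; first exact: k0_lin.
    move=> g ge; have [_ gl _] := ge.
    by rewrite gl // raddfD /= phiZ mxtraceD mxtraceZ Hu // Hv // mulr0 addr0.
  - move=> h he f [hf Hf]; split; first by case: he => h0 _ _; exact: h0.
    by move=> g ge; exact: (Hf _ (endo_comp ge he)).
have VS : V (Ssym (fun i : 'I_q.+1 => xvar k i)).
  have [hk _] := endo_Ssym (endo_id k) (fun i : 'I_q.+1 => k0_x k i).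
  split => // g ge.
  have [_ ->] := endo_Ssym ge (fun i : 'I_q.+1 => k0_x k i).
  rewrite /Ssym rmorph_sum raddf_sum /=.
  rewrite -[RHS](sym_tr_pchar (fun i : 'I_q.+1 => phi A (g (xvar k i))) pp chp).
  by apply: eq_bigr => s _; rewrite rmorph_prod.
pose y := fun i : 'I_q.+1 => xvar k (q.+1 + i).
pose f0 := Ssym (fun i : 'I_q.+1 => xvar k i) * Ssym y.
have R2f0 : R2 q.+1 f0.
  move=> W TW HW; apply: HW; right.
  exists (Ssym (fun i : 'I_q.+1 => xvar k i)), y; split => //.
    by move=> W' _ HW'; exact: HW'.
  by move=> i; exact: k0_x.
have [_ /(_ _ (endo_id k))] := (H f0).2 R2f0 V TV (fun h hh => eq_ind_r V VS hh).
rewrite /f0 rmorphM /Ssym !rmorph_sum.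
have -> : \sum_(s : 'S_q.+1) phi A (\prod_(i < q.+1) xvar k (s i)) =
          \sum_(s : 'S_q.+1) \prod_(i < q.+1) Bm k e1 (s i).
  apply: eq_bigr => s _; rewrite rmorph_prod; apply: eq_bigr => i _.
  rewrite /xvar; apply: (etrans (phiX A (s i))); by rewrite /A ltn_ord.
have -> : \sum_(s : 'S_q.+1) phi A (\prod_(i < q.+1) y (s i)) =
          \sum_(s : 'S_q.+1) \prod_(i < q.+1) Bm k e2 (s i).
  apply: eq_bigr => s _; rewrite rmorph_prod; apply: eq_bigr => i _.
  rewrite /y /xvar; apply: (etrans (phiX A _)); rewrite /A ltnNge leq_addr /= addKn.
  by rewrite -addnn ltn_add2l ltn_ord.
rewrite (chain_sum k e1inj) (chain_sum k e2inj) -mulmxE mul_delta_mx_cond.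
have -> : e1 q.+1 = e2 0%N by rewrite /e1 /e2 subn0.
have -> : e2 q.+1 = e1 0%N by rewrite /e1 /e2 subnn.
rewrite eqxx mulr1n /mxtrace (bigD1 (e1 0%N)) //= mxE !eqxx big1 ?addr0.
  by move=> /eqP; rewrite oner_eq0.
by move=> j /negbTE nj; rewrite mxE nj.
Qed.
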